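(* Let $(X,\to,d_A)$ be a metric transition system over $A$, let $\mathcal G\subseteq[0,1]^X$ and $d_0=\alpha_S(\mathcal G)$, and assume that for every $\varepsilon>0$ and $x\in X$ there is $g\in\mathcal G$ with $g(x)=1$ and $g(x)\ominus g(x')\ge d_0(x,x')-\varepsilon$ for all $x'\in X$. Then \[\alpha_T\big(\mu(\mathit{lo}_T\cup\mathcal G)\big)=(d_{\mathrm{Tr}}\otimes d_0)_{\overrightarrow H}\circ(\hat\delta\times\hat\delta),\] i.e. for $X_1,X_2\subseteq X$ the left side at $(X_1,X_2)$ equals $\bigvee_{(\sigma_1,x_1')\in\hat\delta[X_1]}\bigwedge_{(\sigma_2,x_2')\in\hat\delta[X_2]}\max\{d_{\mathrm{Tr}}(\sigma_1,\sigma_2),d_0(x_1',x_2')\}$. Here $\mu(\mathit{lo}_T\cup\mathcal G)$ is the least fixpoint in $(\mathcal P([0,1]^X),\subseteq)$ of $\mathcal F\mapsto\mathit{lo}_T(\mathcal F)\cup\mathcal G$. The same holds if $\mathit{lo}_T$ is replaced by $\mathit{lo}'(\mathcal F)=\bigcup_{a\in A}\{\bigcirc_af\mid f\in\mathcal F\}\cup\{1\}$.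
   Context: A metric transition system over $A$ is $(X,\to,d_A)$ with $\to\subseteq X\times A\times X$ and a metric $d_A\colon A\times A\to[0,1]$. $r\oplus s=\min\{r+s,1\}$, $r\ominus s=\max\{0,r-s\}$; $\bigvee\emptyset=0$, $\bigwedge\emptyset=1$. $\alpha_S(\mathcal G)(x_1,x_2)=\bigvee_{f\in\mathcal G}(f(x_1)\ominus f(x_2))$. $\hat\delta[Y]=\{(\sigma,x')\mid\sigma\in A^*,\exists x\in Y\colon x\xrightarrow{\sigma}x'\}$ (paths, including the empty word). $d_{\mathrm{Tr}}(\sigma_1,\sigma_2)=1$ if $|\sigma_1|\neq|\sigma_2|$, $d_{\mathrm{Tr}}(\varepsilon,\varepsilon)=0$, $d_{\mathrm{Tr}}(a_1\sigma_1',a_2\sigma_2')=\max\{d_A(a_1,a_2),d_{\mathrm{Tr}}(\sigma_1',\sigma_2')\}$. $(d\otimes d')((u,v),(u',v'))=\max\{d(u,u'),d'(v,v')\}$, and $d_{\overrightarrow H}(U,V)=\bigvee_{u\in U}\bigwedge_{v\in V}d(u,v)$. $\bigcirc_af(x)=\bigvee\{(1-d_A(b,a))\land f(x')\mid x\xrightarrow{b}x'\}$. For $f\colon X\to[0,1]$, $\tilde f(Y)=\bigvee_{x\in Y}f(x)$; $\alpha_T(\mathcal F)(X_1,X_2)=\bigvee_{f\in\mathcal F}(\tilde f(X_1)\ominus\tilde f(X_2))$. $\mathit{lo}_T(\mathcal F)=\bigcup_{a\in A}\{\bigcirc_af\mid f\in\mathrm{cl}^{\mathrm{sh}}(\mathcal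 F)\}\cup\{1\}$ where $\mathrm{cl}^{\mathrm{sh}}$ closes under constant shifts $f\mapsto f\ominus c$, $f\mapsto f\oplus c$, $c\in[0,1]$, and $1$ is the constant-1 function. *)

(* Defs.v *)
From HB Require Import structures.
From mathcomp Require Import all_boot all_order all_algebra.
From mathcomp Require Import boolp classical_sets reals.
Set Implicit Arguments. Unset Strict Implicit. Unset Printing Implicit Defensive.
Import Order.TTheory GRing.Theory Num.Theory.
Local Open Scope classical_set_scope.
Local Open Scope ring_scope.

Section Defs.
Variable R : realType.

Definition oplus (r s : R) : R := Num.min (r + s) 1.
Definition ominus (r s : R) : R := Num.max 0 (r - s).

Definition bigvee (S : set R) : R := if pselect (S = set0) then 0 else sup S.
Definition bigwedge (S : set R) : R := if pselect (S = set0) then 1 else inf S.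

Definition unit_valued {X : Type} (f : X -> R) : Prop := forall x, 0 <= f x <= 1.

Definition unit_metric {A : Type} (d : A -> A -> R) : Prop :=
  [/\ forall a b, 0 <= d a b <= 1,
      forall a b, d a b = 0 <-> a = b,
      forall a b, d a b = d b a &
      forall a b c, d a c <= d a b + d b c].

Variables (X A : Type) (trans : X -> A -> X -> Prop) (dA : A -> A -> R).

Definition alphaS (G : set (X -> R)) (x1 x2 : X) : R :=
  bigvee [set ominus (g x1) (g x2) | g in G].

Inductive path : X -> seq A -> X -> Prop :=
| path_nil x : path x [::] x
| path_cons x a y s z : trans x a y -> path y s z -> path x (a :: s) z.

Definition delta_hat (Y : set X) : set (seq A * X) :=
  [set p | exists2 x, Y x & path x p.1 p.2].

Fixpoint dTr_rec (s1 s2 : seq A) : R :=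
  match s1, s2 with
  | [::], [::] => 0
  | a1 :: s1', a2 :: s2' => Num.max (dA a1 a2) (dTr_rec s1' s2')
  | _, _ => 1
  end.

Definition dTr (s1 s2 : seq A) : R :=
  if size s1 != size s2 then 1 else dTr_rec s1 s2.

Definition dprod {U V : Type} (d : U -> U -> R) (d' : V -> V -> R)
  (p q : U * V) : R := Num.max (d p.1 q.1) (d' p.2 q.2).

Definition hausdorff {U : Type} (d : U -> U -> R) (S T : set U) : R :=
  bigvee [set bigwedge [set d u v | v in T] | u in S].

Definition next_op (a : A) (f : X -> R) (x : X) : R :=
  bigvee [set r | exists b x', trans x b x' /\ r = Num.min (1 - dA b a) (f x')].

Definition cl_sh (F : set (X -> R)) : set (X -> R) :=
  [set h | exists f c, [/\ F f, 0 <= c <= 1 &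
             (h = (fun x => ominus (f x) c) \/ h = (fun x => oplus (f x) c))]].

Definition const1 : X -> R := fun _ => 1.

Definition loT (F : set (X -> R)) : set (X -> R) :=
  [set h | exists a f, cl_sh F f /\ h = next_op a f] `|` [set const1].

Definition lo' (F : set (X -> R)) : set (X -> R) :=
  [set h | exists a f, F f /\ h = next_op a f] `|` [set const1].

Definition lift_fun (f : X -> R) (Y : set X) : R := bigvee (f @` Y).

Definition alphaT (F : set (X -> R)) (X1 X2 : set X) : R :=
  bigvee [set ominus (lift_fun f X1) (lift_fun f X2) | f in F].

(* least fixpoint in (P([0,1]^X), subseteq) of a monotone operator Phi,
   as the intersection of all its pre-fixpoints (Knaster-Tarski) *)
Definition lfp (Phi : set (X -> R) -> set (X -> R)) : set (X -> R) :=
  [set f | forall F : set (X -> R),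
     (forall g, F g -> unit_valued g) -> Phi F `<=` F -> F f].
End Defs.

(* Main.v *)
Require Import Defs.
From HB Require Import structures.
From mathcomp Require Import all_boot all_order all_algebra.
From mathcomp Require Import boolp classical_sets reals.
From mathcomp Require Import lra.
Import Order.TTheory GRing.Theory Num.Theory.
Local Open Scope classical_set_scope.
Local Open Scope ring_scope.
Set Implicit Arguments. Unset Strict Implicit.

Section Aux.
Variable R : realType.
Implicit Types (S : set R).

Lemma bigveeP S : (S = set0 /\ bigvee S = 0) \/ (S !=set0 /\ bigvee S = sup S).
Proof.
rewrite /bigvee; destruct (pselect (S = set0)) as [E|nE]; first by left.
by right; split => //; apply/set0P/eqP.
Qed.

Lemma bigwedgeP S : (S = set0 /\ bigwedge S = 1) \/ (S !=set0 /\ bigwedge S = inf S).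
Proof.
rewrite /bigwedge; destruct (pselect (S = set0)) as [E|nE]; first by left.
by right; split => //; apply/set0P/eqP.
Qed.

Lemma bigvee_ub S (B s : R) : (forall r, S r -> r <= B) -> S s -> s <= bigvee S.
Proof.
move=> hB Ss; case: (bigveeP S) => [[E _]|[ne ->]]; first by move: Ss; rewrite E.
have hs : has_sup S by split; [exists s|exists B; move=> r /hB].
exact: (sup_upper_bound hs Ss).
Qed.

Lemma bigvee_le S (b : R) : (forall r, S r -> r <= b) -> 0 <= b -> bigvee S <= b.
Proof.
move=> hb b0; case: (bigveeP S) => [[_ ->]|[ne ->]] //.
by apply: ge_sup.
Qed.

Lemma bigvee_ge0 S (B : R) : (forall r, S r -> 0 <= r <= B) -> 0 <= bigvee S.
Proof.
move=> h; case: (bigveeP S) => [[_ ->]|[[s Ss] E]] //.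
apply: le_trans (_ : s <= _); first by case/andP: (h _ Ss).
by apply: (bigvee_ub (B := B)) => // r /h /andP[].
Qed.

Lemma bigvee_gt S (B t : R) : (forall r, S r -> r <= B) -> 0 <= t -> t < bigvee S ->
  exists2 s, S s & t < s.
Proof.
move=> hB t0; case: (bigveeP S) => [[_ ->]|[ne ->]]; first by rewrite ltNge t0.
move=> lt; have hs : has_sup S by split => //; exists B; move=> r /hB.
have hp : 0 < sup S - t by rewrite subr_gt0.
have [e Se He] := sup_adherent hp hs.
by exists e => //; move: He; rewrite opprB addrCA subrr addr0.
Qed.

Lemma bigwedge_lb S (B s : R) : (forall r, S r -> B <= r) -> S s -> bigwedge S <= s.
Proof.
move=> hB Ss; case: (bigwedgeP S) => [[E _]|[ne ->]]; first by move: Ss; rewrite E.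
have hl : has_lbound S by exists B; move=> r /hB.
exact: (ge_inf hl Ss).
Qed.

Lemma bigwedge_ge S (b : R) : (forall r, S r -> b <= r) -> b <= 1 -> b <= bigwedge S.
Proof.
move=> hb b1; case: (bigwedgeP S) => [[_ ->]|[ne ->]] //.
by apply: lb_le_inf.
Qed.

Lemma bigwedge_le1 S : (forall r, S r -> 0 <= r <= 1) -> bigwedge S <= 1.
Proof.
move=> h; case: (bigwedgeP S) => [[_ ->]|[[s Ss] E]] //.
have hb : forall r, S r -> 0 <= r by move=> r /h /andP[].
apply: le_trans (bigwedge_lb hb Ss) _; by case/andP: (h _ Ss).
Qed.

Lemma bigwedge_ge0 S : (forall r, S r -> 0 <= r) -> 0 <= bigwedge S.
Proof. by move=> h; apply: bigwedge_ge. Qed.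

End Aux.

Section Main.
Variables (R : realType) (X A : Type) (trans : X -> A -> X -> Prop) (dA : A -> A -> R)
  (G : set (X -> R)).
Hypothesis hdA : unit_metric dA.
Hypothesis hGu : forall g, G g -> unit_valued g.

Lemma dA01 a b : 0 <= dA a b <= 1. Proof. by case: hdA. Qed.
Lemma dAaa a : dA a a = 0. Proof. by case: hdA => _ h _ _; apply/h. Qed.
Lemma dAC a b : dA a b = dA b a. Proof. by case: hdA. Qed.
Lemma dAtri a b c : dA a c <= dA a b + dA b c. Proof. by case: hdA. Qed.

Lemma ominus01 (a b : R) : 0 <= a <= 1 -> 0 <= b <= 1 -> 0 <= ominus a b <= 1.
Proof. by move=> /andP[? ?] /andP[? ?]; rewrite /ominus maxEle; case: (leP 0 (a - b)) => ?; apply/andP; split; lra. Qed.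
Lemma ominus_ge (a b : R) : a - b <= ominus a b.
Proof. by rewrite /ominus maxEle; case: (leP 0 (a - b)) => ?; lra. Qed.
Lemma ominus_ge0 (a b : R) : 0 <= ominus a b.
Proof. by rewrite /ominus maxEle; case: (leP 0 (a - b)) => ?; lra. Qed.
Lemma ominus_pos (a b : R) : 0 < ominus a b -> ominus a b = a - b.
Proof. by rewrite /ominus maxEle; case: (leP 0 (a - b)) => ?; lra. Qed.
Lemma ominus_le (a b h : R) : 0 <= h -> a - b <= h -> ominus a b <= h.
Proof. by rewrite /ominus maxEle; case: (leP 0 (a - b)) => ?; lra. Qed.
Lemma ominus0 (a : R) : 0 <= a -> ominus a 0 = a.
Proof. by rewrite /ominus maxEle; case: (leP 0 (a - 0)) => ?; lra. Qed.
Lemma oplus01 (a b : R) : 0 <= a <= 1 -> 0 <= b <= 1 -> 0 <= oplus a b <= 1.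
Proof. by move=> /andP[? ?] /andP[? ?]; rewrite /oplus minEle; case: (leP (a + b) 1) => ?; apply/andP; split; lra. Qed.
Lemma oplus_le (a b : R) : oplus a b <= a + b.
Proof. by rewrite /oplus minEle; case: (leP (a + b) 1) => ?; lra. Qed.
Lemma oplus_lt1 (a b : R) : oplus a b < 1 -> oplus a b = a + b.
Proof. by rewrite /oplus minEle; case: (leP (a + b) 1) => ?; lra. Qed.
Lemma oplus_le1 (a b : R) : oplus a b <= 1.
Proof. by rewrite /oplus minEle; case: (leP (a + b) 1) => ?; lra. Qed.

Lemma lift_ub (f : X -> R) Y y : unit_valued f -> Y y -> f y <= lift_fun f Y.
Proof.
move=> hf Yy; apply: (bigvee_ub (B := 1)); last by exists y.
by move=> r [z _ <-]; case/andP: (hf z).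
Qed.
Lemma lift_le (f : X -> R) Y b : (forall y, Y y -> f y <= b) -> 0 <= b -> lift_fun f Y <= b.
Proof. by move=> h b0; apply: bigvee_le => // r [z Yz <-]; apply: h. Qed.
Lemma lift01 (f : X -> R) Y : unit_valued f -> 0 <= lift_fun f Y <= 1.
Proof.
move=> hf; apply/andP; split.
  by apply: (bigvee_ge0 (B := 1)) => r [z _ <-]; apply: hf.
by apply: lift_le => // y _; case/andP: (hf y).
Qed.

Lemma dTr_rec01 s t : 0 <= dTr_rec dA s t <= 1.
Proof.
elim: s t => [|a s IH] [|b t] //=; rewrite ?lexx ?ler01 //.
have /andP[h1 h2] := dA01 a b; have /andP[h3 h4] := IH t.
by rewrite le_max ge_max h1 h2 h4.
Qed.
Lemma dTr01 s t : 0 <= dTr dA s t <= 1.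
Proof. by rewrite /dTr; case: ifP => _; rewrite ?lexx ?ler01 ?dTr_rec01. Qed.
Lemma dTr_nil_cons c t : dTr dA [::] (c :: t) = 1.
Proof. by []. Qed.
Lemma dTr_cons_nil c t : dTr dA (c :: t) [::] = 1.
Proof. by []. Qed.
Lemma dTr_cons_ge b s c t :
  dA b c <= dTr dA (b :: s) (c :: t) /\ dTr dA s t <= dTr dA (b :: s) (c :: t).
Proof.
rewrite /dTr /= eqSS; case: ifP => _.
  by have /andP[_ ->] := dA01 b c; split => //; case/andP: (dTr_rec01 s t).
by rewrite !le_max !lexx ?orbT.
Qed.
Lemma dTr_cons_eq b s c t : size s = size t ->
  dTr dA (b :: s) (c :: t) = Num.max (dA b c) (dTr dA s t).
Proof. by rewrite /dTr /= eqSS => ->; rewrite eqxx. Qed.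
Lemma dTr_nil : dTr dA [::] [::] = 0. Proof. by []. Qed.

Local Notation d0 := (alphaS G).
Local Notation D := (dprod (dTr dA) d0).
Local Notation H := (hausdorff D).
Local Notation dh := (delta_hat trans).

Lemma d001 x y : 0 <= d0 x y <= 1.
Proof.
have h : forall r, [set ominus (g x) (g y) | g in G] r -> 0 <= r <= 1.
  by move=> r [g Gg <-]; apply: ominus01; apply: hGu.
apply/andP; split; first exact: (bigvee_ge0 h).
by apply: bigvee_le => // r /h /andP[].
Qed.
Lemma d0_ge g x y : G g -> ominus (g x) (g y) <= d0 x y.
Proof.
move=> Gg; apply: (bigvee_ub (B := 1)); last by exists g.
by move=> r [h Gh <-]; case/andP: (ominus01 (hGu Gh x) (hGu Gh y)).
Qed.
Lemma D01 u v : 0 <= D u v <= 1.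
Proof.
rewrite /dprod; have /andP[h1 h2] := dTr01 u.1 v.1; have /andP[h3 h4] := d001 u.2 v.2.
by rewrite le_max ge_max h1 h2 h4.
Qed.
Lemma D_cons b s z c t z' : D (s, z) (t, z') <= D (b :: s, z) (c :: t, z').
Proof.
rewrite /dprod /= ge_max !le_max lexx !orbT andbT.
by have [_ ->] := dTr_cons_ge b s c t.
Qed.
Lemma D_ge_dA b s z c t z' : dA b c <= D (b :: s, z) (c :: t, z').
Proof.
rewrite /dprod /= le_max; by have [-> _] := dTr_cons_ge b s c t.
Qed.

Lemma wedge01 u T : 0 <= bigwedge [set D u v | v in T] <= 1.
Proof.
apply/andP; split.
  by apply: bigwedge_ge0 => r [v _ <-]; case/andP: (D01 u v).
by apply: bigwedge_le1 => r [v _ <-]; apply: D01.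
Qed.
Lemma H01 S T : 0 <= H S T <= 1.
Proof.
have h : forall r, [set bigwedge [set D u v | v in T] | u in S] r -> 0 <= r <= 1.
  by move=> r [u _ <-]; apply: wedge01.
apply/andP; split; first exact: (bigvee_ge0 h).
by apply: bigvee_le => // r /h /andP[].
Qed.
Lemma H_ge S T u t : S u -> t <= 1 -> (forall v, T v -> t <= D u v) -> t <= H S T.
Proof.
move=> Su t1 h; apply: le_trans (_ : bigwedge [set D u v | v in T] <= _).
  by apply: bigwedge_ge => // r [v Tv <-]; apply: h.
apply: (bigvee_ub (B := 1)); last by exists u.
by move=> r [w _ <-]; case/andP: (wedge01 w T).
Qed.

Definition Qp (f : X -> R) : Prop :=
  forall x (Y : set X) (t : R), 0 < t -> t < f x - lift_fun f Y ->
  exists s z, Defs.path trans x s z /\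
    forall y u z', Y y -> Defs.path trans y u z' -> t <= D (s, z) (u, z').

Lemma Qp_intro f :
  (forall x (Y : set X) (t : R), 0 < t -> t < f x - lift_fun f Y -> (exists y, Y y) ->
  exists s z, Defs.path trans x s z /\
    forall y u z', Y y -> Defs.path trans y u z' -> t <= D (s, z) (u, z')) -> Qp f.
Proof.
move=> h x Y t t0 ht; have [[y Yy]|nY] := pselect (exists y, Y y).
  by apply: h => //; exists y.
exists [::], x; split; first exact: path_nil.
by move=> y u z' Yy; case: nY; exists y.
Qed.

Definition Pp (f : X -> R) : Prop := unit_valued f /\ Qp f.

Lemma Qp_G g : G g -> Qp g.
Proof.
move=> Gg; have hg := hGu Gg; apply: Qp_intro => x Y t t0 ht [y0 Yy0].
have l0 : 0 <= lift_fun g Y by case/andP: (lift01 Y hg).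
have t1 : t <= 1 by case/andP: (hg x) => _ ?; lra.
exists [::], x; split; first exact: path_nil.
move=> y u z' Yy hp; case: hp Yy => [y1 Yy1|y1 c y' u' z1 tr hp' Yy1].
  rewrite /dprod /= le_max; apply/orP; right.
  have := d0_ge x y1 Gg; have := ominus_ge (g x) (g y1); have := lift_ub hg Yy1; lra.
by rewrite /dprod /= dTr_nil_cons le_max t1.
Qed.

Lemma Qp_1 : Qp (@const1 R X).
Proof.
apply: Qp_intro => x Y t t0 ht [y0 Yy0].
have : 1 <= lift_fun (@const1 R X) Y.
  by apply: (lift_ub (f := @const1 R X)) Yy0 => z; rewrite /const1 ler01 lexx.
by rewrite /const1 in ht *; lra.
Qed.

Lemma Qp_ominus f (c : R) : unit_valued f -> 0 <= c <= 1 -> Qp f ->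
  Qp (fun x => ominus (f x) c).
Proof.
move=> hf /andP[c0 c1] hQ; apply: Qp_intro => x Y t t0 ht [y0 Yy0].
set g := fun x => ominus (f x) c.
have {}ht : t < g x - lift_fun g Y := ht.
have hg : unit_valued g by move=> z; apply: ominus01 => //; rewrite c0 c1.
have gy0 := lift_ub hg Yy0; have := ominus_ge0 (f y0) c.
rewrite -/(g y0) => gy0'.
have gx : g x = f x - c by apply: ominus_pos; rewrite -/(g x); lra.
apply: hQ => //.
have : lift_fun f Y <= lift_fun g Y + c.
  apply: lift_le; last lra.
  by move=> y Yy; have := lift_ub hg Yy; have := ominus_ge (f y) c; rewrite -/(g y); lra.
rewrite gx in ht; lra.
Qed.

Lemma Qp_oplus f (c : R) : unit_valued f -> 0 <= c <= 1 -> Qp f ->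
  Qp (fun x => oplus (f x) c).
Proof.
move=> hf /andP[c0 c1] hQ; apply: Qp_intro => x Y t t0 ht [y0 Yy0].
set g := fun x => oplus (f x) c.
have {}ht : t < g x - lift_fun g Y := ht.
have hg : unit_valued g by move=> z; apply: oplus01 => //; rewrite c0 c1.
have gx1 : g x <= 1 by apply: oplus_le1.
have gxle : g x <= f x + c by apply: oplus_le.
have gy : forall y, Y y -> g y = f y + c.
  move=> y Yy; apply: oplus_lt1; rewrite -/(g y).
  have := lift_ub hg Yy; lra.
apply: hQ => //.
have : lift_fun f Y <= lift_fun g Y - c.
  apply: lift_le; last by have := lift_ub hg Yy0; rewrite gy //; have := hf y0; case/andP; lra.
  by move=> y Yy; have := lift_ub hg Yy; rewrite gy //; lra.
lra.
Qed.

Lemma next01 a f : unit_valued f -> unit_valued (next_op trans dA a f).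
Proof.
move=> hf x; rewrite /next_op.
have h : forall r, [set r | exists b x', trans x b x' /\ r = Num.min (1 - dA b a) (f x')] r ->
    0 <= r <= 1.
  move=> r [b [x' [_ ->]]]; have /andP[? ?] := hf x'; have /andP[? ?] := dA01 b a.
  by rewrite le_min ge_min; apply/andP; split; [apply/andP; split; lra|apply/orP; right].
apply/andP; split; first exact: (bigvee_ge0 h).
by apply: bigvee_le => // r /h /andP[].
Qed.

Lemma next_ge a f x b x' : unit_valued f -> trans x b x' ->
  Num.min (1 - dA b a) (f x') <= next_op trans dA a f x.
Proof.
move=> hf tr; apply: (bigvee_ub (B := 1)); last by exists b, x'.
move=> r [b' [y [_ ->]]]; rewrite ge_min; apply/orP; right; by case/andP: (hf y).
Qed.

Lemma Qp_next a f : unit_valued f -> Qp f -> Qp (next_op trans dA a f).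
Proof.
move=> hf hQ; apply: Qp_intro => x Y t t0 ht [y0 Yy0].
set h := next_op trans dA a f.
have hh : unit_valued h by apply: next01.
set L := lift_fun h Y.
have {}ht : t < h x - L := ht.
have L0 : 0 <= L by case/andP: (lift01 Y hh).
have hx1 : h x <= 1 by case/andP: (hh x).
have t1 : t <= 1 by lra.
have [m0 [b [x' [tr ->]]] hm] : exists2 m,
    [set r | exists b x', trans x b x' /\ r = Num.min (1 - dA b a) (f x')] m & t + L < m.
  apply: (bigvee_gt (B := 1)); last by rewrite -/(next_op trans dA a f x) -/h; lra.
    by move=> r [b' [y [_ ->]]]; rewrite ge_min; apply/orP; right; case/andP: (hf y).
  lra.
set m := Num.min (1 - dA b a) (f x') in hm *.
have m1 : m <= 1 - dA b a by rewrite /m ge_min lexx.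
have m2 : m <= f x' by rewrite /m ge_min lexx orbT.
set s := m - L.
set Y' := [set y' | exists y c, [/\ Y y, trans y c y' & dA b c < s]].
have hY' : forall y', Y' y' -> f y' <= L.
  move=> y' [y [c [Yy tr' hc]]].
  have hy := lift_ub hh Yy; rewrite -/L in hy.
  have := next_ge a hf tr'; rewrite -/h => hmin.
  have tri := dAtri c b a; rewrite (dAC c b) in tri.
  have : Num.min (1 - dA c a) (f y') <= L by lra.
  rewrite ge_min => /orP[|] //; rewrite /s in hc; lra.
have lY' : lift_fun f Y' <= L by apply: lift_le.
have q1 : 0 < (t + s) / 2 by rewrite /s; lra.
have q2 : (t + s) / 2 < f x' - lift_fun f Y' by rewrite /s; lra.
have [sg [z [hp hall]]] := hQ x' Y' ((t + s) / 2) q1 q2.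
exists (b :: sg), z; split; first exact: path_cons tr hp.
move=> y u z' Yy hpu; case: hpu Yy => [y1 Yy1|y1 c y' u' z1 tr' hp' Yy1].
  by rewrite /dprod /= dTr_cons_nil le_max t1.
have [hc|hc] := ltP (dA b c) s.
  apply: le_trans _ (D_cons b sg z c u' z1).
  have Yy' : Y' y' by exists y1, c; split.
  have := hall y' u' z1 Yy' hp'.
  rewrite /s; lra.
apply: le_trans _ (D_ge_dA b sg z c u' z1); rewrite /s in hc; lra.
Qed.

Lemma Pp_set f X1 X2 : Pp f ->
  ominus (lift_fun f X1) (lift_fun f X2) <= H (dh X1) (dh X2).
Proof.
move=> [hf hQ]; have /andP[H0 H1] := H01 (dh X1) (dh X2).
apply: ominus_le => //.
have /andP[l10 l11] := lift01 X1 hf; have /andP[l20 l21] := lift01 X2 hf.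
rewrite leNgt; apply/negP => hlt.
set t := (H (dh X1) (dh X2) + (lift_fun f X1 - lift_fun f X2)) / 2.
have [r [x X1x <-] hr] : exists2 r, (f @` X1) r & t + lift_fun f X2 < r.
  apply: (bigvee_gt (B := 1)); first by move=> r [z _ <-]; case/andP: (hf z).
    rewrite /t; lra.
  rewrite /t; rewrite /lift_fun in hlt *; lra.
have q1 : 0 < t by rewrite /t; lra.
have q2 : t < f x - lift_fun f X2 by lra.
have [s [z [hp hall]]] := hQ x X2 t q1 q2.
have : t <= H (dh X1) (dh X2).
  apply: (H_ge (u := (s, z))); first by exists x.
    rewrite /t; lra.
  move=> [u z'] [y X2y /= hpu]; exact: hall X2y hpu.
rewrite /t; lra.
Qed.

Lemma minmax_aux (p q gz K : R) : K < 1 - p ->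
  Num.min (1 - Num.max p q) gz <= K -> Num.min (1 - q) gz <= K.
Proof.
rewrite !minEle maxEle; case: (leP p q) => ?; case: (leP (1 - q) gz) => ?;
  try case: (leP (1 - p) gz) => ?; lra.
Qed.

Definition fold (s : seq A) (g : X -> R) : X -> R :=
  foldr (fun a h => next_op trans dA a h) g s.

Lemma fold01 s g : unit_valued g -> unit_valued (fold s g).
Proof. by move=> hg; elim: s => [|a s IH] //=; apply: next01. Qed.

Lemma fold_path x s z g : unit_valued g -> Defs.path trans x s z -> g z <= fold s g x.
Proof.
move=> hg; elim => [y|y a y' s' z' tr hp IH] //=.
apply: le_trans IH _; apply: le_trans (next_ge a (fold01 s' hg) tr).
rewrite dAaa subr0 le_min lexx andbT; by case/andP: (fold01 s' hg y').
Qed.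

Lemma fold_upper g s : unit_valued g -> forall y (K : R), 0 <= K ->
  (forall u z, Defs.path trans y u z -> size u = size s ->
     Num.min (1 - dTr dA s u) (g z) <= K) -> fold s g y <= K.
Proof.
move=> hg; elim: s => [|a s IH] y K K0 h /=.
  have := h [::] y (path_nil _ _) erefl; rewrite dTr_nil subr0.
  by rewrite ge_min => /orP[|] //; case/andP: (hg y) => _ h1 h2; apply: le_trans h1 h2.
apply: bigvee_le => // r [b [y' [tr ->]]].
rewrite ge_min; have [hb|hb] := leP (1 - dA b a) K; first by [].
apply/orP; right; apply: IH => // u z hp hs.
have hs' : size (b :: u) = size (a :: s) by rewrite /= hs.
have := h (b :: u) z (path_cons tr hp) hs'.
rewrite dTr_cons_eq ?hs // (dAC a b); exact: minmax_aux.
Qed.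

Lemma aux2 (p q gz W e : R) : W <= Num.max p q -> gz <= 1 - q + e -> 0 <= e ->
  Num.min (1 - p) gz <= 1 - W + e.
Proof.
rewrite minEle maxEle; case: (leP p q) => ?; case: (leP (1 - p) gz) => ?; lra.
Qed.

Hypothesis hsep : forall (eps : R) (x : X), 0 < eps ->
  exists g, [/\ G g, g x = 1 &
    forall x', ominus (g x) (g x') >= alphaS G x x' - eps].

Lemma main_gen (Phi : set (X -> R) -> set (X -> R)) :
  (forall F, G `<=` Phi F) ->
  (forall F a f, F f -> unit_valued f -> Phi F (next_op trans dA a f)) ->
  (Phi Pp `<=` Pp) ->
  forall X1 X2, alphaT (lfp Phi) X1 X2 = H (dh X1) (dh X2).
Proof.
move=> hG hN hP X1 X2.
set M := lfp Phi.
have MP : M `<=` Pp by move=> f Mf; apply: Mf => // g [].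
have Mu : forall f, M f -> unit_valued f by move=> f /MP [].
have GM : G `<=` M by move=> g Gg F hF hPhi; apply: hPhi; apply: hG.
have NM : forall a f, M f -> M (next_op trans dA a f).
  move=> a f Mf F hF hPhi; apply: (hPhi); apply: hN; first exact: (Mf F hF hPhi).
  exact: (hF _ (Mf F hF hPhi)).
have foldM : forall s g, G g -> M (fold s g).
  by move=> s g Gg; elim: s => [|a s IH] /=; [apply: GM|apply: NM].
have elt01 : forall r, [set ominus (lift_fun f X1) (lift_fun f X2) | f in M] r -> 0 <= r <= 1.
  by move=> r [f Mf <-]; apply: ominus01; apply: lift01; apply: Mu.
have /andP[H0 H1] := H01 (dh X1) (dh X2).
apply/eqP; rewrite eq_le; apply/andP; split.
  apply: bigvee_le => // r [f Mf <-]; apply: Pp_set; exact: MP.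
have aT0 : 0 <= alphaT M X1 X2 by apply: (bigvee_ge0 elt01).
apply: bigvee_le => // r [[s z] [x1 X1x1 /= hp] <-].
apply/ler_addgt0Pr => e e0.
have [g [Gg gz1 hg]] := hsep z e0.
have hgu := hGu Gg.
set W := bigwedge _.
have /andP[W0 W1] : 0 <= W <= 1 by apply: wedge01.
set f := fold s g.
have hfu : unit_valued f by apply: fold01.
have l1 : 1 <= lift_fun f X1.
  apply: le_trans (lift_ub hfu X1x1); rewrite -gz1; exact: fold_path.
have l2 : lift_fun f X2 <= 1 - W + e.
  apply: lift_le; last lra.
  move=> y X2y; apply: fold_upper => //; first lra.
  move=> u z' hpu _.
  have hW : W <= D (s, z) (u, z').
    apply: (bigwedge_lb (B := 0)); first by move=> r' [v _ <-]; case/andP: (D01 (s, z) v).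
    by exists (u, z') => //; exists y.
  apply: aux2 hW _ (ltW e0).
  have := hg z'; rewrite gz1 => hz.
  have : ominus 1 (g z') <= 1 - g z'.
    by apply: ominus_le; case/andP: (hgu z') => _ ?; lra.
  lra.
have : ominus (lift_fun f X1) (lift_fun f X2) <= alphaT M X1 X2.
  apply: (bigvee_ub (B := 1)); first by move=> r' /elt01 /andP[].
  by exists f => //; apply: foldM.
have := ominus_ge (lift_fun f X1) (lift_fun f X2); lra.
Qed.

End Main.

Unset Implicit Arguments. Set Strict Implicit.

Theorem mainTheorem4 (R : realType) (X A : Type)
  (trans : X -> A -> X -> Prop) (dA : A -> A -> R)
  (G : set (X -> R)) :
  unit_metric dA ->
  (forall g, G g -> unit_valued g) ->
  (forall (eps : R) (x : X), 0 < eps ->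
     exists g, [/\ G g, g x = 1 &
       forall x', ominus (g x) (g x') >= alphaS G x x' - eps]) ->
  (forall X1 X2 : set X,
     alphaT (lfp (fun F => loT trans dA F `|` G)) X1 X2 =
     hausdorff (dprod (dTr dA) (alphaS G))
       (delta_hat trans X1) (delta_hat trans X2)) /\
  (forall X1 X2 : set X,
     alphaT (lfp (fun F => lo' trans dA F `|` G)) X1 X2 =
     hausdorff (dprod (dTr dA) (alphaS G))
       (delta_hat trans X1) (delta_hat trans X2)).
Proof.
move=> hdA hGu hsep; split.
  apply: (main_gen hdA hGu hsep).
  - by move=> F g Gg; right.
  - move=> F a f Ff hf; left; left; exists a, f; split => //.
    exists f, 0; split => //; first by rewrite lexx ler01.
    left; apply: funext => x; rewrite ominus0 //; by case/andP: (hf x).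
  - move=> h [[[a [f0 [[f1 [c [Pf1 c01 [->|->]]]] ->]]]|->]|Gh].
    + case: Pf1 => hu hq; split; first by apply: next01 => // x; apply: ominus01 => //.
      by apply: Qp_next => //; [move=> x; apply: ominus01|apply: Qp_ominus].
    + case: Pf1 => hu hq; split; first by apply: next01 => // x; apply: oplus01 => //.
      by apply: Qp_next => //; [move=> x; apply: oplus01|apply: Qp_oplus].
    + by split; [move=> x; rewrite /const1 lexx ler01|apply: Qp_1].
    + by split; [apply: hGu|apply: Qp_G].
apply: (main_gen hdA hGu hsep).
- by move=> F g Gg; right.
- by move=> F a f Ff hf; left; left; exists a, f.
- move=> h [[[a [f0 [Pf0 ->]]]|->]|Gh].
  + case: Pf0 => hu hq; split; first by apply: next01.
    by apply: Qp_next.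
  + by split; [move=> x; rewrite /const1 lexx ler01|apply: Qp_1].
  + by split; [apply: hGu|apply: Qp_G].
Qed.
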